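(* Let $k=\mathbb{F}_3$, let $O_7(k)$ be the group of $7\times7$ matrices over $k$ orthogonal for the bilinear form $\langle x,y\rangle=x_1y_7+x_2y_6+\dots+x_7y_1$ on $k^7$, and let \[ A=\begin{pmatrix} 0&0&1&0&0&1&0\\ 1&0&0&0&0&0&1\\ 0&1&0&0&0&0&0\\ 0&0&0&0&0&0&0\\ 0&1&0&0&0&0&1\\ 0&0&1&0&1&0&0\\ 0&0&0&0&0&1&0 \end{pmatrix}. \] Then there is no $g\in O_7(k)$ such that the matrix $M=g^{-1}Ag$ satisfies $M_{ij}=0$ for all $(i,j)$ in \[ \{(3,1),(4,1),(5,1),(5,2),(6,1),(6,2),(6,3),(7,1),(7,2),(7,3),(7,4),(7,5)\} \] (with the remaining entries arbitrary).
   Context: $M_{ij}$ denotes the entry in row $i$ and column $j$. *)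

(* Defs.v *)
(* Indices are 0-based: paper's index i corresponds to i-1. *)
From mathcomp Require Import all_boot all_order all_algebra.
Set Implicit Arguments. Unset Strict Implicit. Unset Printing Implicit Defensive.
Import GRing.Theory.
Local Open Scope ring_scope.

Definition k3 := 'F_3.

Definition Jform : 'M[k3]_7 := \matrix_(i < 7, j < 7) ((i + j)%N == 6%N)%:R.

Definition in_O7 (g : 'M[k3]_7) : bool :=
  (g \in unitmx) && (g^T *m Jform *m g == Jform).

Definition rowsA : seq (seq nat) :=
  [:: [:: 0; 0; 1; 0; 0; 1; 0];
      [:: 1; 0; 0; 0; 0; 0; 1];
      [:: 0; 1; 0; 0; 0; 0; 0];
      [:: 0; 0; 0; 0; 0; 0; 0];
      [:: 0; 1; 0; 0; 0; 0; 1];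
      [:: 0; 0; 1; 0; 1; 0; 0];
      [:: 0; 0; 0; 0; 0; 1; 0]]%N.

Definition Amat : 'M[k3]_7 :=
  \matrix_(i < 7, j < 7) (nth 0%N (nth [::] rowsA i) j)%:R.

Definition zero_pos : seq (nat * nat) :=
  [:: (2,0); (3,0); (4,0); (4,1); (5,0); (5,1); (5,2);
      (6,0); (6,1); (6,2); (6,3); (6,4)]%N.

(* Main.v *)
Require Import Defs.
From mathcomp Require Import all_boot all_order all_algebra ring.
Set Implicit Arguments. Unset Strict Implicit. Unset Printing Implicit Defensive.
Import GRing.Theory.
Local Open Scope ring_scope.

Inductive F3 := F0 | F1 | F2.
Definition addF (x y : F3) : F3 :=
  match x, y with
  | F0, z | z, F0 => z
  | F1, F1 => F2 | F1, F2 => F0 | F2, F1 => F0 | F2, F2 => F1 end.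
Definition mulF (x y : F3) : F3 :=
  match x, y with
  | F0, _ | _, F0 => F0
  | F1, z | z, F1 => z
  | F2, F2 => F1 end.
Definition eqF (x y : F3) : bool :=
  match x, y with F0, F0 | F1, F1 | F2, F2 => true | _, _ => false end.
Lemma eqFP x y : reflect (x = y) (eqF x y).
Proof. by case: x; case: y; constructor. Qed.

Definition phi (x : F3) : k3 := match x with F0 => 0 | F1 => 1 | F2 => 1 + 1 end.
Lemma phi_add x y : phi (addF x y) = phi x + phi y.
Proof. by case: x; case: y; apply/eqP. Qed.
Lemma phi_mul x y : phi (mulF x y) = phi x * phi y.
Proof. by case: x; case: y; apply/eqP. Qed.
Lemma phi_inj x y : phi x = phi y -> x = y.
Proof. by case: x; case: y => // /eqP. Qed.
Lemma phi_surj (z : k3) : exists x, phi x = z.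
Proof.
case: z => [[|[|[|m]]] Hm].
- by exists F0; apply/val_inj.
- by exists F1; apply/val_inj.
- by exists F2; apply/val_inj.
- by [].
Qed.
Record vecF := VF { c0 : F3; c1 : F3; c2 : F3; c3 : F3; c4 : F3; c5 : F3; c6 : F3 }.
Definition AF (u : vecF) : vecF :=
  VF (addF (c2 u) (c5 u)) (addF (c0 u) (c6 u)) (c1 u) F0
     (addF (c1 u) (c6 u)) (addF (c2 u) (c4 u)) (c5 u).
Definition bilF (u v : vecF) : F3 :=
  addF (mulF (c0 u) (c6 v)) (addF (mulF (c1 u) (c5 v)) (addF (mulF (c2 u) (c4 v))
  (addF (mulF (c3 u) (c3 v)) (addF (mulF (c4 u) (c2 v)) (addF (mulF (c5 u) (c1 v))
   (mulF (c6 u) (c0 v))))))).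
Definition lcF (a : F3) (u : vecF) (b : F3) (v : vecF) : vecF :=
  VF (addF (mulF a (c0 u)) (mulF b (c0 v))) (addF (mulF a (c1 u)) (mulF b (c1 v)))
     (addF (mulF a (c2 u)) (mulF b (c2 v))) (addF (mulF a (c3 u)) (mulF b (c3 v)))
     (addF (mulF a (c4 u)) (mulF b (c4 v))) (addF (mulF a (c5 u)) (mulF b (c5 v)))
     (addF (mulF a (c6 u)) (mulF b (c6 v))).
Definition eqV (u v : vecF) : bool :=
  eqF (c0 u) (c0 v) && eqF (c1 u) (c1 v) && eqF (c2 u) (c2 v) && eqF (c3 u) (c3 v)
  && eqF (c4 u) (c4 v) && eqF (c5 u) (c5 v) && eqF (c6 u) (c6 v).
Lemma eqF_refl x : eqF x x.
Proof. by case: x. Qed.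
Lemma eqVP u v : reflect (u = v) (eqV u v).
Proof.
case: u => a0 a1 a2 a3 a4 a5 a6; case: v => b0 b1 b2 b3 b4 b5 b6; rewrite /eqV /=.
apply: (iffP idP) => [|[-> -> -> -> -> -> ->]]; last by rewrite !eqF_refl.
by move=> /andP [/andP [/andP [/andP [/andP [/andP [/eqFP -> /eqFP ->] /eqFP ->] /eqFP ->] /eqFP ->] /eqFP ->] /eqFP ->].
Qed.
Definition allF (P : F3 -> bool) := P F0 && P F1 && P F2.
Definition exF (P : F3 -> bool) := P F0 || P F1 || P F2.
Lemma allFP (P : F3 -> bool) : allF P -> forall x, P x.
Proof. by move=> /andP [] /andP [] ? ? ? []. Qed.
Lemma exFI (P : F3 -> bool) x : P x -> exF P.
Proof. by rewrite /exF; case: x => ->; rewrite ?orbT. Qed.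
Definition allV (P : vecF -> bool) :=
  allF (fun a0 => allF (fun a1 => allF (fun a2 => allF (fun a3 =>
  allF (fun a4 => allF (fun a5 => allF (fun a6 => P (VF a0 a1 a2 a3 a4 a5 a6)))))))).
Lemma allVP (P : vecF -> bool) : allV P -> forall u, P u.
Proof.
move=> H [a0 a1 a2 a3 a4 a5 a6].
move: H => /allFP /(_ a0) /allFP /(_ a1) /allFP /(_ a2) /allFP /(_ a3)
  /allFP /(_ a4) /allFP /(_ a5) /allFP /(_ a6). done.
Qed.
Definition nzF x := ~~ eqF x F0.
Definition zeroV := VF F0 F0 F0 F0 F0 F0 F0.

Definition check : bool :=
 allV (fun u =>
  if eqV u zeroV then true else
  if nzF (bilF u u) || nzF (bilF u (AF u)) || nzF (bilF (AF u) (AF u)) then true else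
  allV (fun v =>
   if nzF (bilF u v) || nzF (bilF v v) || nzF (bilF (AF v) v)
      || exF (fun c => eqV v (lcF c u F0 v))
      || ~~ exF (fun a => exF (fun b => eqV (AF u) (lcF a u b v))) then true else
   allV (fun w => nzF (bilF u w) || nzF (bilF v w) || nzF (bilF w w)
      || nzF (bilF (AF v) w)
      || exF (fun c => exF (fun d => eqV w (lcF c u d v)))))).

Lemma check_ok : check = true.
Proof. vm_compute. reflexivity. Qed.
Lemma exFP (P : F3 -> bool) : exF P -> exists x, P x.
Proof. by rewrite /exF => /orP [/orP [] | ] H; eexists; exact: H. Qed.

Lemma phi_bilF u v : phi (bilF u v) =
  phi (c0 u) * phi (c6 v) + (phi (c1 u) * phi (c5 v) + (phi (c2 u) * phi (c4 v) +
  (phi (c3 u) * phi (c3 v) + (phi (c4 u) * phi (c2 v) + (phi (c5 u) * phi (c1 v) +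
  phi (c6 u) * phi (c0 v)))))).
Proof. by rewrite /bilF !phi_add !phi_mul. Qed.

Lemma bil_sym u v : bilF u v = bilF v u.
Proof. apply: phi_inj; rewrite !phi_bilF; ring. Qed.

Lemma bil_lcr u a v b w :
  bilF u (lcF a v b w) = addF (mulF a (bilF u v)) (mulF b (bilF u w)).
Proof.
apply: phi_inj; rewrite phi_add !phi_mul !phi_bilF.
case: u => *; case: v => *; case: w => *; rewrite /lcF /= !phi_add !phi_mul; ring.
Qed.

Lemma addF0 : addF F0 F0 = F0. Proof. by []. Qed.
Lemma mulF0 a : mulF a F0 = F0. Proof. by case: a. Qed.

Lemma no_sol u v w a b :
 u <> zeroV -> (forall c, v <> lcF c u F0 v) -> (forall c d, w <> lcF c u d v) ->
 AF u = lcF a u b v -> bilF u u = F0 -> bilF u v = F0 -> bilF v v = F0 ->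
 bilF (AF v) v = F0 -> bilF u w = F0 -> bilF v w = F0 -> bilF w w = F0 ->
 bilF (AF v) w = F0 -> False.
Proof.
move=> Hu Hv Hw HA Huu Huv Hvv HAv Huw Hvw Hww HAw.
have /allVP /(_ u) := check_ok.
rewrite (introF (eqVP _ _) Hu).
have HuAu : bilF u (AF u) = F0 by rewrite HA bil_lcr Huu Huv !mulF0.
have HAuAu : bilF (AF u) (AF u) = F0.
  by rewrite HA bil_lcr !(bil_sym (lcF _ _ _ _)) !bil_lcr Huu Huv (bil_sym v u) Huv Hvv !mulF0.
rewrite Huu HuAu HAuAu /= => /allVP /(_ v).
rewrite Huv Hvv HAv /=.
have -> : exF (fun c => eqV v (lcF c u F0 v)) = false.
  by apply/negP => /exFP [c /eqVP /Hv].
have -> : exF (fun a => exF (fun b => eqV (AF u) (lcF a u b v))) = true.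
  by apply: (exFI (x := a)); apply: (exFI (x := b)); apply/eqVP.
move=> /= /allVP /(_ w).
rewrite Huw Hvw Hww HAw /=.
by move/exFP => [c /exFP [d /eqVP /Hw]].
Qed.
Definition getF (u : vecF) (i : nat) : F3 :=
  match i with 0 => c0 u | 1 => c1 u | 2 => c2 u | 3 => c3 u | 4 => c4 u
  | 5 => c5 u | _ => c6 u end%N.
Definition mx (u : vecF) : 'cV[k3]_7 := \col_(i < 7) phi (getF u i).

Lemma mx_surj (f : 'cV[k3]_7) : exists u, f = mx u.
Proof.
have [x0 H0] := phi_surj (f ord0 ord0).
have [x1 H1] := phi_surj (f (@Ordinal 7 1 isT) ord0).
have [x2 H2] := phi_surj (f (@Ordinal 7 2 isT) ord0).
have [x3 H3] := phi_surj (f (@Ordinal 7 3 isT) ord0).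
have [x4 H4] := phi_surj (f (@Ordinal 7 4 isT) ord0).
have [x5 H5] := phi_surj (f (@Ordinal 7 5 isT) ord0).
have [x6 H6] := phi_surj (f (@Ordinal 7 6 isT) ord0).
exists (VF x0 x1 x2 x3 x4 x5 x6); apply/matrixP => i j; rewrite !mxE (ord1 j).
case: i => [[|[|[|[|[|[|[|m]]]]]]] Hm] /=.
- by rewrite H0; congr (f _ _); apply: val_inj.
- by rewrite H1; congr (f _ _); apply: val_inj.
- by rewrite H2; congr (f _ _); apply: val_inj.
- by rewrite H3; congr (f _ _); apply: val_inj.
- by rewrite H4; congr (f _ _); apply: val_inj.
- by rewrite H5; congr (f _ _); apply: val_inj.
- by rewrite H6; congr (f _ _); apply: val_inj.
- by [].
Qed.

Lemma mx_inj u v : mx u = mx v -> u = v.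
Proof.
move/matrixP => H.
have E i (Hi : (i < 7)%N) : getF u i = getF v i.
  by apply: phi_inj; have := H (Ordinal Hi) ord0; rewrite !mxE.
clear H; case: u E => ? ? ? ? ? ? ?; case: v => ? ? ? ? ? ? ? E.
by move: (E 0%N isT) (E 1%N isT) (E 2%N isT) (E 3%N isT) (E 4%N isT) (E 5%N isT) (E 6%N isT) => /= -> -> -> -> -> -> ->.
Qed.

Lemma mx_lc a u b v : mx (lcF a u b v) = phi a *: mx u + phi b *: mx v.
Proof.
apply/matrixP => i j; rewrite !mxE.
by case: i => [[|[|[|[|[|[|[|m]]]]]]] Hm] //=; rewrite phi_add !phi_mul.
Qed.

Lemma mx_zero : mx zeroV = 0.
Proof. by apply/matrixP => i j; rewrite !mxE; case: i => [[|[|[|[|[|[|[|m]]]]]]] Hm]. Qed.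

Lemma mx_A u : Amat *m mx u = mx (AF u).
Proof.
apply/matrixP => i j; rewrite !mxE.
rewrite !big_ord_recr big_ord0 /= !mxE /=.
case: i => [[|[|[|[|[|[|[|m]]]]]]] Hm] //=; rewrite ?phi_add /=; ring.
Qed.

Lemma mx_bil u v : ((mx u)^T *m Jform *m mx v) ord0 ord0 = phi (bilF u v).
Proof.
rewrite phi_bilF !mxE.
rewrite !big_ord_recr big_ord0 /= !mxE.
rewrite !big_ord_recr !big_ord0 /= !mxE /=.
ring.
Qed.
Lemma AJ : Amat^T *m Jform = Jform *m Amat.
Proof.
apply/matrixP => i j; rewrite !mxE !big_ord_recr !big_ord0 /= !mxE /=.
by case: i => [[|[|[|[|[|[|[|m]]]]]]] Hm]; case: j => [[|[|[|[|[|[|[|n]]]]]]] Hn] //=;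
  rewrite ?mul0r ?mulr0 ?mul1r ?mulr1 ?add0r ?addr0.
Qed.

Lemma delta_entry (Z : 'M[k3]_7) (i j : 'I_7) :
  (delta_mx (0 : 'I_1) i *m Z *m delta_mx j (0 : 'I_1)) ord0 ord0 = Z i j.
Proof. by rewrite -rowE -colE !mxE. Qed.

Lemma entry_lemma (X Y : 'M[k3]_7) (i j : 'I_7) :
  ((X *m delta_mx i (0 : 'I_1))^T *m Jform *m (Y *m delta_mx j (0 : 'I_1))) ord0 ord0
  = (X^T *m Jform *m Y) i j.
Proof.
rewrite trmx_mul trmx_delta -delta_entry.
by rewrite !mulmxA.
Qed.
Lemma phi0 : phi F0 = 0. Proof. by []. Qed.

Theorem lemma2p2 :
  ~ exists g : 'M[k3]_7, in_O7 g /\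
      (forall i j : 'I_7, ((i : nat), (j : nat)) \in zero_pos ->
         (invmx g *m Amat *m g) i j = 0).
Proof.
move=> [g [/andP [gU /eqP gJ] Hz]].
set M := invmx g *m Amat *m g in Hz.
have gM : g *m M = Amat *m g by rewrite /M !mulmxA mulmxV // mul1mx.
clearbody M.
have key : (Amat *m g)^T *m Jform *m g = Jform *m M.
  by rewrite trmx_mul -(mulmxA g^T) AJ !mulmxA -(mulmxA _ Amat) -gM !mulmxA gJ.
have ginj (x : 'cV[k3]_7) : g *m x = 0 -> x = 0.
  by move=> H; rewrite -(mulKmx gU x) H mulmx0.
pose D (k : 'I_7) : 'cV[k3]_7 := delta_mx k 0.
pose o1 : 'I_7 := @Ordinal 7 1 isT.
pose o2 : 'I_7 := @Ordinal 7 2 isT.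
have [U1 HU1] := mx_surj (g *m D ord0).
have [U2 HU2] := mx_surj (g *m D o1).
have [U3 HU3] := mx_surj (g *m D o2).
have [a Ha] := phi_surj (M ord0 ord0).
have [b Hb] := phi_surj (M o1 ord0).
have bil_g (i j : 'I_7) U V : g *m D i = mx U -> g *m D j = mx V ->
    phi (bilF U V) = Jform i j.
  by move=> HU HV; rewrite -mx_bil -HU -HV /D (entry_lemma g g) gJ.
have bil_Ag (i j : 'I_7) U V : g *m D i = mx U -> g *m D j = mx V ->
    phi (bilF (AF U) V) = (Jform *m M) i j.
  by move=> HU HV; rewrite -mx_bil -mx_A -HU -HV /D (mulmxA Amat g) (entry_lemma (Amat *m g) g) key.
have Z0 (i j : 'I_7) U V : g *m D i = mx U -> g *m D j = mx V ->
    Jform i j = 0 -> bilF U V = F0.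
  by move=> HU HV HJ; apply: phi_inj; rewrite (bil_g _ _ _ _ HU HV) HJ.
have JM1 (j : 'I_7) : (Jform *m M) o1 j = M (@Ordinal 7 5 isT) j.
  rewrite !mxE !big_ord_recr !big_ord0 /= !mxE /=.
  rewrite ?mul0r ?mul1r ?add0r ?addr0; congr (M _ _); exact: val_inj.
apply: (@no_sol U1 U2 U3 a b).
- move=> E; move: HU1; rewrite E mx_zero => /ginj /matrixP /(_ ord0 ord0).
  by rewrite !mxE /= => /eqP; rewrite oner_eq0.
- move=> c E.
  have : g *m (D o1 - phi c *: D ord0) = 0.
    by rewrite mulmxBr -scalemxAr HU1 HU2 {1}E mx_lc phi0 scale0r addr0 subrr.
  move=> /ginj /matrixP /(_ o1 ord0); rewrite !mxE /= mulr0 subr0 => /eqP.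
  by rewrite oner_eq0.
- move=> c d E.
  have : g *m (D o2 - (phi c *: D ord0 + phi d *: D o1)) = 0.
    by rewrite mulmxBr mulmxDr -!scalemxAr HU1 HU2 HU3 E mx_lc subrr.
  move=> /ginj /matrixP /(_ o2 ord0); rewrite !mxE /= !mulr0 addr0 subr0 => /eqP.
  by rewrite oner_eq0.
- apply: mx_inj; rewrite -mx_A mx_lc -HU1 -HU2 Ha Hb mulmxA -gM -mulmxA.
  rewrite !scalemxAr -mulmxDr; congr (g *m _).
  rewrite /D -colE.
  apply/matrixP => i j; rewrite !mxE (ord1 j) /=.
  case: i => [[|[|[|[|[|[|[|m]]]]]]] Hm] /=.
  + rewrite mulr1 mulr0 addr0; congr (M _ _); exact: val_inj.
  + rewrite mulr1 mulr0 add0r; congr (M _ _); exact: val_inj.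
  + by rewrite !mulr0 addr0 Hz.
  + by rewrite !mulr0 addr0 Hz.
  + by rewrite !mulr0 addr0 Hz.
  + by rewrite !mulr0 addr0 Hz.
  + by rewrite !mulr0 addr0 Hz.
  + by [].
- by apply: (Z0 _ _ _ _ HU1 HU1); rewrite mxE.
- by apply: (Z0 _ _ _ _ HU1 HU2); rewrite mxE.
- by apply: (Z0 _ _ _ _ HU2 HU2); rewrite mxE.
- by apply: phi_inj; rewrite (bil_Ag _ _ _ _ HU2 HU2) JM1 Hz.
- by apply: (Z0 _ _ _ _ HU1 HU3); rewrite mxE.
- by apply: (Z0 _ _ _ _ HU2 HU3); rewrite mxE.
- by apply: (Z0 _ _ _ _ HU3 HU3); rewrite mxE.
- by apply: phi_inj; rewrite (bil_Ag _ _ _ _ HU2 HU3) JM1 Hz.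
Qed.
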